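(* Let $t\ge 2$ be an integer and let $0\le i<j<k\le t-2$ be integers. Let $p_i\in D_i$, $p_j\in D_j$, $p_k\in D_k$. Then $(p_i,p_j,p_k)$ is a right turn (i.e., the three points are in clockwise orientation).
   Context: Let $t\ge 2$ be an integer. For $0\le i\le t-3$ define the vector $v_i:=(3(t-i),-3i)$, and define points $w_0:=(0,0)$ and $w_{i+1}:=w_i+v_i$ for $i=0,\dots,t-3$. For $i=0,\dots,t-2$, let $C_i$ be the closed unit square whose lower left corner is $w_i$, and let $D_i:=\{((t+1)4^{t+1}x,\,(t+1)4^{t+1}y):(x,y)\in C_i\}$ be $C_i$ scaled by the factor $(t+1)4^{t+1}$. *)

(* Defs.v *)
From Stdlib Require Import Reals Lra Lia.
Open Scope R_scope.

Definition point := (R * R)%type.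

Definition vvec (t i : nat) : point :=
  (3 * (INR t - INR i), - (3 * INR i)).

Fixpoint wpt (t i : nat) : point :=
  match i with
  | O => (0, 0)
  | S i' => (fst (wpt t i') + fst (vvec t i'), snd (wpt t i') + snd (vvec t i'))
  end.

Definition in_C (t i : nat) (q : point) : Prop :=
  fst (wpt t i) <= fst q <= fst (wpt t i) + 1 /\
  snd (wpt t i) <= snd q <= snd (wpt t i) + 1.

Definition scale_factor (t : nat) : R := (INR t + 1) * 4 ^ (t + 1).

Definition in_D (t i : nat) (p : point) : Prop :=
  exists q : point, in_C t i q /\
    p = (scale_factor t * fst q, scale_factor t * snd q).

Definition orient (p q r : point) : R :=
  (fst q - fst p) * (snd r - snd p) - (snd q - snd p) * (fst r - fst p).

Definition right_turn (p q r : point) : Prop := orient p q r < 0.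

(* Main.v *)
Require Import Defs.
From Stdlib Require Import Reals Lra Lia Psatz.
Open Scope R_scope.

Lemma wpt_fst t n : fst (wpt t n) = 3 * (INR n * INR t - INR n * (INR n - 1) / 2).
Proof.
  induction n as [|n IH]; simpl wpt; simpl fst.
  - simpl; lra.
  - rewrite IH; unfold vvec; simpl fst; rewrite S_INR; lra.
Qed.

Lemma wpt_snd t n : snd (wpt t n) = - (3 * (INR n * (INR n - 1) / 2)).
Proof.
  induction n as [|n IH]; simpl wpt; simpl snd.
  - simpl; lra.
  - rewrite IH; unfold vvec; simpl snd; rewrite S_INR; lra.
Qed.

Lemma key (Ax Ay Bx By a b T d1x d1y d2x d2y : R) :
  0 <= Ax -> Ay <= 0 -> 0 <= Bx -> By <= 0 ->
  Ax - Ay = 3 * a * T -> Bx - By = 3 * b * T ->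
  Ax * By - Ay * Bx = - (9/2) * T * a * b * (a + b) ->
  1 <= a -> 1 <= b -> 2 <= T ->
  -1 <= d1x <= 1 -> -1 <= d1y <= 1 -> -1 <= d2x <= 1 -> -1 <= d2y <= 1 ->
  (Ax + d1x) * (By + d2y) - (Ay + d1y) * (Bx + d2x) < 0.
Proof.
  intros.
  assert (Ax * d2y <= Ax) by nra.
  assert (- Ay * d2x <= - Ay) by nra.
  assert (d1x * By <= - By) by nra.
  assert (- d1y * Bx <= Bx) by nra.
  assert (d1x * d2y <= 1) by nra.
  assert (- d1y * d2x <= 1) by nra.
  assert (1 <= a * b) by nra.
  assert (T * (a+b) * (a * b) >= T * (a + b)) by nra.
  nra.
Qed.

Theorem lemma6 (t i j k : nat) (pi pj pk : point) :
  (2 <= t)%nat -> (i < j)%nat -> (j < k)%nat -> (k <= t - 2)%nat ->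
  in_D t i pi -> in_D t j pj -> in_D t k pk ->
  right_turn pi pj pk.
Proof.
  intros Ht Hij Hjk Hk [qi [[Ci1 Ci2] ->]] [qj [[Cj1 Cj2] ->]] [qk [[Ck1 Ck2] ->]].
  unfold right_turn, orient; simpl fst; simpl snd.
  set (s := scale_factor t).
  assert (Hs : 0 < s).
  { unfold s, scale_factor. apply Rmult_lt_0_compat.
    pose proof (pos_INR t); lra. apply pow_lt; lra. }
  rewrite !wpt_fst, !wpt_snd in *.
  assert (HT : 2 <= INR t) by (apply (le_INR 2); lia).
  assert (Hij' : INR i + 1 <= INR j) by (rewrite <- S_INR; apply le_INR; lia).
  assert (Hjk' : INR j + 1 <= INR k) by (rewrite <- S_INR; apply le_INR; lia).
  assert (Hk' : INR k + 2 <= INR t) by (replace 2 with (INR 2) by (simpl; lra);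
     rewrite <- plus_INR; apply le_INR; lia).
  pose proof (pos_INR i) as Hi0.
  set (x := INR i) in *; set (y := INR j) in *; set (z := INR k) in *; set (T := INR t) in *.
  set (wix := 3 * (x * T - x * (x - 1) / 2)) in *.
  set (wjx := 3 * (y * T - y * (y - 1) / 2)) in *.
  set (wkx := 3 * (z * T - z * (z - 1) / 2)) in *.
  set (wiy := - (3 * (x * (x - 1) / 2))) in *.
  set (wjy := - (3 * (y * (y - 1) / 2))) in *.
  set (wky := - (3 * (z * (z - 1) / 2))) in *.
  assert (Hkey : (fst qj - fst qi) * (snd qk - snd qj) - (snd qj - snd qi) * (fst qk - fst qj) < 0).
  { replace (fst qj - fst qi) with ((wjx - wix) + ((fst qj - wjx) - (fst qi - wix))) by ring.
    replace (snd qk - snd qj) with ((wky - wjy) + ((snd qk - wky) - (snd qj - wjy))) by ring.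
    replace (snd qj - snd qi) with ((wjy - wiy) + ((snd qj - wjy) - (snd qi - wiy))) by ring.
    replace (fst qk - fst qj) with ((wkx - wjx) + ((fst qk - wkx) - (fst qj - wjx))) by ring.
    apply (key _ _ _ _ (y - x) (z - y) T); try lra.
    - unfold wjx, wix.
      replace (3 * (y * T - y * (y - 1) / 2) - 3 * (x * T - x * (x - 1) / 2))
        with (3 * (y - x) * (T - (x + y - 1) / 2)) by field. nra.
    - unfold wjy, wiy. nra.
    - unfold wkx, wjx.
      replace (3 * (z * T - z * (z - 1) / 2) - 3 * (y * T - y * (y - 1) / 2))
        with (3 * (z - y) * (T - (y + z - 1) / 2)) by field. nra.
    - unfold wky, wjy. nra.
    - unfold wjx, wix, wjy, wiy. field.
    - unfold wkx, wjx, wky, wjy. field.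
    - unfold wjx, wix, wjy, wiy, wkx, wky. field. }
  replace ((s * fst qj - s * fst qi) * (s * snd qk - s * snd qi) -
   (s * snd qj - s * snd qi) * (s * fst qk - s * fst qi))
   with ((s * s) * ((fst qj - fst qi) * (snd qk - snd qj) - (snd qj - snd qi) * (fst qk - fst qj))) by ring.
  assert (0 < s * s) by nra. nra.
Qed.
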